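(* Let $k$ be a field of characteristic zero and $X,H$ finite groups. Let $\pi:kA(H,H)\to k\mathrm{Out}(H)$ be the quotient map and $\tau$ the usual symmetrizing form on $k\mathrm{Out}(H)$ (coefficient of $1$). Then the symmetric bilinear form on $k\bar A(X,H)$ defined by $\langle\bar\alpha,\bar\beta\rangle_X=\tau\pi(\alpha^{op}\beta)$ (for representatives $\alpha,\beta\in kA(X,H)$) is non-degenerate.
   Context: For finite groups $X,Y$, $kB(X,Y)=k\otimes_{\mathbb Z}B(X,Y)$ with $B(X,Y)$ the Grothendieck group of finite $(X,Y)$-bisets; composition $U\times_YV$ extended bilinearly; the opposite $U^{op}$ is the same set with $y\cdot u\cdot x=x^{-1}uy^{-1}$. $kA(X,Y)\subseteq kB(X,Y)$ is the span of the bisets that are free on the left and on the right (spanned by $\mathrm{Ind}^X_A\mathrm{Iso}_\sigma\mathrm{Res}^Y_S$, $A\le X$, $S\le Y$, $\sigma:S\to A$ an isomorphism). $kI_A(X,H)=\sum_K kA(X,K)kA(K,H)$ over groups $K$ isomorphic to a proper subgroup of $H$, and $k\bar A(X,H)=kA(X,H)/kI_A(X,H)$; then $k\bar A(H,H)\cong k\mathrm{Out}(H)$ (via $\sigma\mapsto\mathrm{Iso}_\sigma$) and $\pi$ is the quotient map $kA(H,H)\to k\bar A(H,H)$. The form is well defined. *)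

(* Defs.v *)
From HB Require Import structures.
From mathcomp Require Import all_boot all_order all_algebra all_fingroup.
From mathcomp Require Import gproduct automorphism.
Set Implicit Arguments. Unset Strict Implicit. Unset Printing Implicit Defensive.
Import GRing.Theory.
Local Open Scope ring_scope.

(* A finite (X,Y)-biset U is viewed as a left (X x Y)-set via
   (x,y).u = x u y^-1.  The transitive biset (X x Y)/L (left cosets of a
   subgroup L of X x Y) has stabilizers conjugate to L, and iso classes of
   transitive bisets <-> conjugacy classes of subgroups of X x Y.

   An element of kB(X,Y) is REPRESENTED by a formal k-combination
   f : {ffun {set gX*gY} -> k}, standing for  sum_L f(L) [(X x Y)/L]
   (sets L that are not subgroups of X x Y are ignored).
   Two representations denote the same element of kB(X,Y) iff they have the
   same coefficient on each iso class of transitive bisets ([bequiv]). *)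

Notation kB k gX gY := {ffun {set (gX * gY)} -> k^o}.

Section Burnside.
Variable k : fieldType.

Section Basic.
Variables (gX gY : finGroupType) (X : {group gX}) (Y : {group gY}).

Definition bsub (L : {set (gX * gY)}) : bool :=
  group_set L && (L \subset setX X Y).

(* coefficient of the iso class of [(X x Y)/N] in the element represented by f *)
Definition bcls (f : kB k gX gY) : kB k gX gY :=
  [ffun N => \sum_(L : {set (gX * gY)} | bsub L && (N \in (L :^: setX X Y)%g)) f L].

Definition bequiv (f g : kB k gX gY) : Prop := bcls f = bcls g.

Definition bdelta (L : {set (gX * gY)}) : kB k gX gY := [ffun N => (N == L)%:R].

(* transitive biset free on the left and on the right:
   stabilizer L meets X x 1 and 1 x Y trivially *)
Definition bifree (L : {set (gX * gY)}) : bool :=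
  bsub L && [forall p in L, (p.1 == 1%g) == (p.2 == 1%g)].

Definition inkA (f : kB k gX gY) : Prop :=
  exists g : kB k gX gY, bequiv f g /\ forall L, g L != 0 -> bifree L.

End Basic.

(* opposite biset: [(X x Y)/L]^op = [(Y x X)/swap(L)] *)
Definition bop (gX gY : finGroupType) (f : kB k gX gY) : kB k gY gX :=
  [ffun N : {set (gY * gX)} => f [set (p.2, p.1) | p in N]].

Section Comp.
Variables (gX gY gZ : finGroupType) (X : {group gX}) (Y : {group gY}) (Z : {group gZ}).

Definition G3 : {set (gX * (gY * gZ))} := setX X (setX Y Z).

(* stabilizer of (u,v) under (x,y,z).(u,v) = ((x,y)u, (y,z)v) *)
Definition stab3 (u : {set (gX * gY)}) (v : {set (gY * gZ)}) :=
  [set g in G3 | (((g.1, g.2.1) *: u)%g == u) && (((g.2.1, g.2.2) *: v)%g == v)].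

Definition p13 (S : {set (gX * (gY * gZ))}) : {set (gX * gZ)} :=
  [set (g.1, g.2.2) | g in S].

(* [(X x Y)/L] x_Y [(Y x Z)/M]: the X x Z-orbits of the balanced product
   correspond to the X x Y x Z-orbits on pairs of cosets (u,v), the stabilizer
   in X x Z of [u,v] being p13 (stab3 u v).  Each orbit is counted once via
   the weight |stab|/|G3| summed over its points. *)
Definition compL (L : {set (gX * gY)}) (M : {set (gY * gZ)}) : kB k gX gZ :=
  \sum_(u in lcosets L (setX X Y)) \sum_(v in lcosets M (setX Y Z))
     ((#|stab3 u v|%:R / #|G3|%:R) *: bdelta (p13 (stab3 u v))).

Definition bcomp (f : kB k gX gY) (g : kB k gY gZ) : kB k gX gZ :=
  \sum_(L : {set (gX * gY)} | bsub X Y L) \sum_(M : {set (gY * gZ)} | bsub Y Z M)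
     ((f L * g M) *: compL L M).

End Comp.

Definition iso_proper_sub (gK gH : finGroupType) (K : {group gK}) (H : {group gH}) : Prop :=
  exists H' : {group gH}, (H' \proper H)%g /\ (K \isog H')%g.

Inductive inkIA (gX gH : finGroupType) (X : {group gX}) (H : {group gH}) :
    kB k gX gH -> Prop :=
| kIA_prod (gK : finGroupType) (K : {group gK}) (a : kB k gX gK) (b : kB k gK gH) :
    iso_proper_sub K H -> inkA X K a -> inkA K H b -> inkIA X H (bcomp X K H a b)
| kIA_zero : inkIA X H 0
| kIA_add f g : inkIA X H f -> inkIA X H g -> inkIA X H (f + g)
| kIA_scale (c : k) f : inkIA X H f -> inkIA X H (c *: f)
| kIA_equiv f g : bequiv X H f g -> inkIA X H f -> inkIA X H g.

Section Out.
Variables (gH : finGroupType) (H : {group gH}).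

Definition Iso (s : {perm gH}) : kB k gH gH := bdelta [set (s h, h) | h in H].

Definition innerb (s : {perm gH}) : bool :=
  [exists x in H, [forall h in H, s h == (h ^ x)%g]].

(* tau (pi gamma) = t, where pi : kA(H,H) -> kAbar(H,H) ~= kOut(H) is the
   quotient map (Iso_sigma mod kI_A <-> class of sigma in Out(H)) and tau is
   the coefficient of 1 in kOut(H): gamma = sum_sigma c_sigma Iso_sigma
   mod kI_A(H,H), and the coefficient of 1 = Inn(H) is the sum of c over
   inner automorphisms. *)
Definition taupi (g : kB k gH gH) (t : k) : Prop :=
  exists c : {ffun {perm gH} -> k},
    \sum_(s in Aut H | innerb s) c s = t /\
    inkIA H H (g - \sum_(s in Aut H) (c s *: Iso s)).

End Out.

End Burnside.

(* Main.v *)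
Require Import Defs.
From HB Require Import structures.
From mathcomp Require Import all_boot all_order all_algebra all_fingroup.
From mathcomp Require Import gproduct automorphism.
Set Implicit Arguments. Unset Strict Implicit. Unset Printing Implicit Defensive.
Import GRing.Theory.
Local Open Scope ring_scope.


Section S1.
Variable k : fieldType.
Variables (gX gY : finGroupType) (X : {group gX}) (Y : {group gY}).
Local Notation G := (setX X Y).

Lemma bclsE (f : kB k gX gY) N :
  bcls X Y f N = \sum_(L | bsub X Y L && (N \in L :^: G)%g) f L.
Proof. by rewrite ffunE. Qed.

Lemma bcls_add (f g : kB k gX gY) : bcls X Y (f + g) = bcls X Y f + bcls X Y g.
Proof. by apply/ffunP=> N; rewrite !ffunE -big_split /=; apply: eq_bigr => L _; rewrite ffunE. Qed.

Lemma bcls_scale c (f : kB k gX gY) : bcls X Y (c *: f) = c *: bcls X Y f.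
Proof. by apply/ffunP=> N; rewrite !ffunE scaler_sumr; apply: eq_bigr => L _; rewrite ffunE. Qed.

Lemma bcls0 : bcls X Y (0 : kB k gX gY) = 0.
Proof. by apply/ffunP=> N; rewrite !ffunE big1 // => L _; rewrite ffunE. Qed.

Lemma bcls_opp (f : kB k gX gY) : bcls X Y (- f) = - bcls X Y f.
Proof. by rewrite -scaleN1r bcls_scale scaleN1r. Qed.

Lemma bcls_sum I (r : seq I) (P : pred I) (F : I -> kB k gX gY) :
  bcls X Y (\sum_(i <- r | P i) F i) = \sum_(i <- r | P i) bcls X Y (F i).
Proof. exact: (big_morph _ bcls_add bcls0). Qed.

Lemma cls_trans (L N : {set gX * gY}) : (N \in L :^: G)%g -> (N :^: G = L :^: G)%g.
Proof. by case/imsetP=> g Gg ->; rewrite conjugates_conj lcoset_id. Qed.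

Lemma cls_refl (L : {set gX * gY}) : (L \in L :^: G)%g.
Proof. by apply/imsetP; exists 1%g; rewrite ?group1 ?conjsg1. Qed.

Lemma cls_sym (L N : {set gX * gY}) : (N \in L :^: G)%g -> (L \in N :^: G)%g.
Proof. by move/cls_trans=> ->; exact: cls_refl. Qed.

Lemma bsubJ L g : bsub X Y L -> g \in G -> bsub X Y (L :^ g)%g.
Proof.
case/andP=> gL sLG Gg; apply/andP; split.
  exact: (@groupP _ (conjG_group (Group gL) g)).
by rewrite -(conjGid Gg) conjSg.
Qed.

Lemma bsub_cls L N : bsub X Y L -> (N \in L :^: G)%g -> bsub X Y N.
Proof. by move=> bL /imsetP[g Gg ->]; exact: bsubJ. Qed.

End S1.


Section S2.
Variable k : fieldType.
Hypothesis k0 : [pchar k] =i pred0.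
Variables (gX gY : finGroupType) (X : {group gX}) (Y : {group gY}).
Local Notation G := (setX X Y).

Lemma natk_neq0 n : (0 < n)%N -> (n%:R : k) != 0.
Proof. by move=> n0; rewrite (proj1 (pcharf0P k) k0) -lt0n. Qed.

Lemma class_sum (V : lmodType k) (a : kB k gX gY) (F : {set gX * gY} -> V) :
  (forall L g, bsub X Y L -> g \in G -> F (L :^ g)%g = F L) ->
  \sum_(L | bsub X Y L) a L *: F L =
  \sum_(N | bsub X Y N) (bcls X Y a N / (#|(N :^: G)%g|)%:R) *: F N.
Proof.
move=> FJ.
under [RHS]eq_bigr => N _ do rewrite bclsE mulr_suml scaler_suml.
rewrite (exchange_big_dep (bsub X Y)) /=; last by move=> N L _ /andP[].
apply: eq_bigr => L bL.
rewrite (eq_bigr (fun _ => (a L / (#|(L :^: G)%g|)%:R) *: F L)); last first.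
  move=> N /andP[_ /andP[_ NL]].
  by case/imsetP: NL => g Gg ->; rewrite FJ // conjugates_conj lcoset_id.
rewrite sumr_const -scaler_nat scalerA.
have -> : #|[pred N | bsub X Y N && (bsub X Y L && (N \in (L :^: G)%g))]| = #|(L :^: G)%g|.
  apply: eq_card => N; rewrite !inE bL /=.
  by case NL: (N \in _); rewrite ?andbF // (bsub_cls bL NL).
rewrite mulrC -mulrA mulVf ?mulr1 //.
by apply: natk_neq0; apply/card_gt0P; exists L; exact: cls_refl.
Qed.

End S2.


Lemma lcosetsJ (T : finGroupType) (L : {set T}) (G : {group T}) g :
  g \in G -> lcosets (L :^ g)%g G = [set (u :* g)%g | u in lcosets L G].
Proof.
move=> Gg; apply/setP=> U; apply/lcosetsP/imsetP.
  case=> x Gx ->; exists ((x * g^-1) *: L)%g.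
    by apply/lcosetsP; exists (x * g^-1)%g; rewrite ?groupM ?groupV.
  by rewrite conjsgE -lcosetM mulgA.
case=> u /lcosetsP[x Gx ->] ->; exists (x * g)%g; first by rewrite groupM.
by rewrite conjsgE -lcosetM mulgK mulgA.
Qed.

Lemma rcoset_eq (T : finGroupType) (A B : {set T}) g : ((A :* g)%g == (B :* g)%g) = (A == B).
Proof. by apply/eqP/eqP=> [|->] //; exact: rcoset_inj. Qed.

Section S3.
Variable k : fieldType.
Variables (gX gY gZ : finGroupType) (X : {group gX}) (Y : {group gY}) (Z : {group gZ}).

Lemma stab3Jl u v g : stab3 X Y Z (u :* g)%g v = stab3 X Y Z u v.
Proof. by apply/setP=> x; rewrite !inE mulgA rcoset_eq. Qed.

Lemma stab3Jr u v g : stab3 X Y Z u (v :* g)%g = stab3 X Y Z u v.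
Proof. by apply/setP=> x; rewrite !inE [in X in _ && (_ && X)]mulgA rcoset_eq. Qed.

Lemma compLJl (L : {set gX * gY}) M g : g \in setX X Y ->
  compL k X Y Z (L :^ g)%g M = compL k X Y Z L M.
Proof.
move=> Gg; rewrite /compL (lcosetsJ _ Gg) big_imset /=; last first.
  by move=> u u' _ _; exact: rcoset_inj.
by apply: eq_bigr => u _; apply: eq_bigr => v _; rewrite stab3Jl.
Qed.

Lemma compLJr (L : {set gX * gY}) (M : {set gY * gZ}) g : g \in setX Y Z ->
  compL k X Y Z L (M :^ g)%g = compL k X Y Z L M.
Proof.
move=> Gg; rewrite /compL; apply: eq_bigr => u _.
rewrite (lcosetsJ _ Gg) big_imset /=; last by move=> v v' _ _; exact: rcoset_inj.
by apply: eq_bigr => v _; rewrite stab3Jr.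
Qed.

End S3.

Section S4.
Variable k : fieldType.
Hypothesis k0 : [pchar k] =i pred0.
Variables (gX gY gZ : finGroupType) (X : {group gX}) (Y : {group gY}) (Z : {group gZ}).

Lemma class_sum_eq (gA gB : finGroupType) (A : {group gA}) (B : {group gB})
   (V : lmodType k) (a a' : kB k gA gB) (F : {set gA * gB} -> V) :
  (forall L g, bsub A B L -> g \in setX A B -> F (L :^ g)%g = F L) ->
  bequiv A B a a' ->
  \sum_(L | bsub A B L) a L *: F L = \sum_(L | bsub A B L) a' L *: F L.
Proof. by move=> FJ e; rewrite !(class_sum k0) // e. Qed.

Lemma bcomp_equivl (a a' : kB k gX gY) (b : kB k gY gZ) :
  bequiv X Y a a' -> bcomp X Y Z a b = bcomp X Y Z a' b.
Proof.
move=> e; rewrite /bcomp.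
under eq_bigr => L _ do under eq_bigr => M _ do rewrite -scalerA.
under [RHS]eq_bigr => L _ do under eq_bigr => M _ do rewrite -scalerA.
under eq_bigr => L _ do rewrite -scaler_sumr.
under [RHS]eq_bigr => L _ do rewrite -scaler_sumr.
apply: class_sum_eq e => L g _ Gg.
by apply: eq_bigr => M _; rewrite compLJl.
Qed.

Lemma bcomp_equivr (a : kB k gX gY) (b b' : kB k gY gZ) :
  bequiv Y Z b b' -> bcomp X Y Z a b = bcomp X Y Z a b'.
Proof.
move=> e; rewrite /bcomp; apply: eq_bigr => L _.
under eq_bigr => M _ do rewrite mulrC -scalerA.
under [RHS]eq_bigr => M _ do rewrite mulrC -scalerA.
apply: class_sum_eq e => M g _ Gg.
by rewrite compLJr.
Qed.

End S4.


Definition swapset (T1 T2 : finType) (N : {set T1 * T2}) : {set T2 * T1} :=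
  [set (p.2, p.1) | p in N].

Lemma swapsetE (T1 T2 : finType) (N : {set T1 * T2}) :
  swapset N = [set p | (p.2, p.1) \in N].
Proof.
apply/setP=> [[a b]]; rewrite inE; apply/imsetP/idP => [[[c d] cd [-> ->]] //|].
by move=> ab; exists (b, a).
Qed.

Lemma mem_swapset (T1 T2 : finType) (N : {set T1 * T2}) p :
  (p \in swapset N) = ((p.2, p.1) \in N).
Proof. by rewrite swapsetE inE. Qed.

Lemma swapsetK (T1 T2 : finType) : cancel (@swapset T1 T2) (@swapset T2 T1).
Proof. by move=> N; apply/setP=> [[a b]]; rewrite !mem_swapset. Qed.

Lemma swapset_conj (gA gB : finGroupType) (N : {set gA * gB}) g :
  swapset (N :^ g)%g = (swapset N :^ (g.2, g.1))%g.
Proof. by apply/setP=> [[a b]]; rewrite mem_swapset !mem_conjg mem_swapset. Qed.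

Section S5.
Variables (gX gY : finGroupType) (X : {group gX}) (Y : {group gY}).


Lemma group_set_swap (L : {set gX * gY}) : group_set (swapset L) = group_set L.
Proof.
apply/group_setP/group_setP => [] [L1 LM]; split.
- by move: L1; rewrite mem_swapset.
- move=> x y Lx Ly; have := LM (x.2, x.1) (y.2, y.1).
  by rewrite !mem_swapset /= -!surjective_pairing; apply.
- by rewrite mem_swapset.
- move=> x y; rewrite !mem_swapset; exact: LM.
Qed.

Lemma bsub_swap (L : {set gX * gY}) : bsub Y X (swapset L) = bsub X Y L.
Proof.
rewrite /bsub group_set_swap; congr (_ && _).
apply/subsetP/subsetP => sub p.
  by move=> Lp; have := sub (p.2, p.1); rewrite mem_swapset -surjective_pairing !inE andbC; apply.
by rewrite mem_swapset => /sub; rewrite !inE andbC.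
Qed.

Lemma bifree_swap (L : {set gX * gY}) : bifree Y X (swapset L) = bifree X Y L.
Proof.
rewrite /bifree bsub_swap; congr (_ && _).
apply/forall_inP/forall_inP => H p.
  by move=> Lp; have := H (p.2, p.1); rewrite mem_swapset -surjective_pairing eq_sym; apply.
by rewrite mem_swapset => /H; rewrite eq_sym.
Qed.

Lemma cls_swap (L : {set gX * gY}) (N : {set gY * gX}) :
  (N \in swapset L :^: setX Y X)%g = (swapset N \in L :^: setX X Y)%g.
Proof.
apply/imsetP/imsetP => [] [g Gg E].
  exists (g.2, g.1); first by move: Gg; rewrite !inE andbC.
  by rewrite E swapset_conj swapsetK.
exists (g.2, g.1); first by move: Gg; rewrite !inE andbC.
by rewrite -[N]swapsetK E swapset_conj.
Qed.

Lemma bcls_bop (k : fieldType) (f : kB k gX gY) N : bcls Y X (bop f) N = bcls X Y f (swapset N).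
Proof.
rewrite !bclsE (reindex (@swapset _ _) (onW_bij _ (Bijective (@swapsetK _ _) (@swapsetK _ _)))) /=.
apply: eq_big => L; first by rewrite bsub_swap cls_swap.
by move=> _; rewrite ffunE; exact: (congr1 f (swapsetK L)).
Qed.

Lemma bop_equiv (k : fieldType) (f f' : kB k gX gY) : bequiv X Y f f' -> bequiv Y X (bop f) (bop f').
Proof. by move=> e; apply/ffunP=> N; rewrite !bcls_bop e. Qed.

End S5.


Lemma stabE (T : finGroupType) (L : {set T}) a x : group_set L ->
  ((x *: (a *: L)) == a *: L)%g = (x ^ a \in L)%g.
Proof.
move=> gL; have -> : L = Group gL by [].
rewrite -lcosetM; apply/eqP/idP => [E|xa].
  by have := lcoset_refl (Group gL) (x * a)%g; rewrite E mem_lcoset.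
by apply/lcoset_eqP; rewrite mem_lcoset.
Qed.

Section S6.
Variables (gX gY : finGroupType) (X : {group gX}) (Y : {group gY}).

Lemma bf_inj1 (L : {set gX * gY}) (x y : gX) (z : gY) : bifree X Y L ->
  ((x, z) \in L) -> ((y, z) \in L) -> x = y.
Proof.
case/andP=> /andP[gL _] /forall_inP bf h1 h2.
have := groupM (h1 : (x, z) \in Group gL) (groupVr (h2 : (y, z) \in Group gL)).
move/bf => /=; rewrite mulgV eqxx => /eqP/eqP.
by move/eqP; rewrite -eq_mulgV1 => /eqP.
Qed.

Lemma bf_inj2 (L : {set gX * gY}) (x : gX) (y z : gY) : bifree X Y L ->
  ((x, y) \in L) -> ((x, z) \in L) -> y = z.
Proof.
case/andP=> /andP[gL _] /forall_inP bf h1 h2.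
have := groupM (h1 : (x, y) \in Group gL) (groupVr (h2 : (x, z) \in Group gL)).
move/bf => /=; rewrite mulgV eqxx => /eqP/esym/eqP.
by move/eqP; rewrite -eq_mulgV1 => /eqP.
Qed.

Lemma conjg_pair (x : gX) (z : gY) (a : gX * gY) : ((x, z) ^ a)%g = (x ^ a.1, z ^ a.2)%g.
Proof. by []. Qed.

End S6.

Lemma bifreeJ (gX gY : finGroupType) (X : {group gX}) (Y : {group gY}) (L : {set gX * gY}) g :
  bifree X Y L -> g \in setX X Y -> bifree X Y (L :^ g)%g.
Proof.
case/andP=> bL /forall_inP bf Gg; rewrite /bifree bsubJ //=.
apply/forall_inP => p; rewrite mem_conjg => /bf /=.
by rewrite !conjg_eq1.
Qed.

Section S7.
Variables (gX gY gZ : finGroupType) (X : {group gX}) (Y : {group gY}) (Z : {group gZ}).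

Lemma stab3P (L : {set gX * gY}) (M : {set gY * gZ}) a b g :
  group_set L -> group_set M ->
  (g \in stab3 X Y Z (a *: L)%g (b *: M)%g) =
  [&& g \in G3 X Y Z, (g.1, g.2.1) \in (L :^ a^-1)%g & (g.2.1, g.2.2) \in (M :^ b^-1)%g].
Proof. by move=> gL gM; rewrite inE !stabE // !mem_conjgV. Qed.

Lemma stab3_card (L : {set gX * gY}) (M : {set gY * gZ}) a b :
  bifree X Y L -> bifree Y Z M -> a \in setX X Y -> b \in setX Y Z ->
  (#|p13 (stab3 X Y Z (a *: L)%g (b *: M)%g)| <= #|Y|)%N.
Proof.
move=> fL fM Ga Gb.
have gL : group_set L by case/andP: fL => /andP[].
have gM : group_set M by case/andP: fM => /andP[].
have fL' := bifreeJ fL (groupVr Ga); have fM' := bifreeJ fM (groupVr Gb).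
apply: leq_trans (leq_imset_card _ _) _.
rewrite -(@card_in_imset _ _ (fun g : gX * (gY * gZ) => g.2.1)); last first.
  move=> [g1 [g2 g3]] [h1 [h2 h3]]; rewrite !stab3P //= => /and3P[_ A1 A2] /and3P[_ B1 B2] E.
  subst h2; by rewrite (bf_inj1 fL' A1 B1) (bf_inj2 fM' A2 B2).
apply: subset_leq_card; apply/subsetP => y /imsetP[g]; rewrite stab3P // => /and3P[G _ _] ->.
by move: G; rewrite !inE => /and3P[].
Qed.

End S7.


Section S8.
Variable k : fieldType.
Hypothesis k0 : [pchar k] =i pred0.

Lemma compL_big (gX gY gZ : finGroupType) (X : {group gX}) (Y : {group gY}) (Z : {group gZ})
   (L : {set gX * gY}) (M : {set gY * gZ}) (N : {set gX * gZ}) :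
  bifree X Y L -> bifree Y Z M -> (#|Y| < #|N|)%N -> compL k X Y Z L M N = 0.
Proof.
move=> fL fM YN; rewrite /compL sum_ffunE big1 // => u /lcosetsP[a Ga ->].
rewrite sum_ffunE big1 // => v /lcosetsP[b Gb ->].
rewrite !ffunE; case: eqP => [E|] /=; last by rewrite scaler0.
have := stab3_card fL fM Ga Gb; rewrite -E leqNgt YN //.
Qed.

Lemma bcomp_big (gX gY gZ : finGroupType) (X : {group gX}) (Y : {group gY}) (Z : {group gZ})
   (a : kB k gX gY) (b : kB k gY gZ) (N : {set gX * gZ}) :
  inkA X Y a -> inkA Y Z b -> (#|Y| < #|N|)%N -> bcomp X Y Z a b N = 0.
Proof.
move=> [a' [ea fa]] [b' [eb fb]] YN.
rewrite (bcomp_equivl k0 _ _ ea) (bcomp_equivr k0 _ _ eb) /bcomp sum_ffunE big1 // => L _.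
rewrite sum_ffunE big1 // => M _; rewrite ffunE.
have [->|/fa fL] := eqVneq (a' L) 0; first by rewrite mul0r scale0r.
have [->|/fb fM] := eqVneq (b' M) 0; first by rewrite mulr0 scale0r.
by rewrite compL_big ?scaler0.
Qed.

Lemma kIA_vanish (gX gH : finGroupType) (X : {group gX}) (H : {group gH}) (f : kB k gX gH) :
  inkIA X H f -> forall N : {set gX * gH}, (#|H| <= #|N|)%N -> bcls X H f N = 0.
Proof.
elim=> {f}.
- move=> gK K a b [H' [pH' iso]] iA iB N HN.
  have KH : (#|K| < #|N|)%N.
    by rewrite (card_isog iso); apply: leq_trans (proper_card pH') HN.
  rewrite bclsE big1 // => L /andP[_ /imsetP[g _ E]].
  by rewrite bcomp_big // -(cardJg L g) -E.
- by move=> N _; rewrite bcls0 ffunE.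
- by move=> f g _ IHf _ IHg N HN; rewrite bcls_add ffunE IHf // IHg // addr0.
- by move=> c f _ IHf N HN; rewrite bcls_scale ffunE IHf // scaler0.
- by move=> f g e _ IHf N HN; rewrite -e IHf.
Qed.

End S8.


Lemma bcls_delta (k : fieldType) (gX gY : finGroupType) (X : {group gX}) (Y : {group gY})
   (D N : {set gX * gY}) :
  bcls X Y (bdelta k D) N = (bsub X Y D && (N \in D :^: setX X Y)%g)%:R.
Proof.
rewrite bclsE; case: (boolP (bsub X Y D && _)) => c.
  rewrite (bigD1 D) //= big1 ?addr0; first by rewrite ffunE eqxx.
  by move=> L /andP[_ nLD]; rewrite ffunE (negbTE nLD).
rewrite big1 // => L cL; rewrite ffunE; case: eqP => // E.
by rewrite -E cL in c.
Qed.

Section S9.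
Variables (gH : finGroupType) (H : {group gH}).
Definition diagH : {set gH * gH} := [set (h, h) | h in H].

Lemma card_diagH : #|diagH| = #|H|.
Proof. by rewrite card_imset // => x y [->]. Qed.

Lemma bsub_Iso (s : {perm gH}) : s \in Aut H -> bsub H H [set (s h, h) | h in H].
Proof.
move=> sA; rewrite /bsub; apply/andP; split.
  apply/group_setP; split.
    apply/imsetP; exists 1%g => //; congr (_, _).
    by have := morph1 (autm_morphism sA); rewrite /= autmE.
  move=> _ _ /imsetP[x Hx ->] /imsetP[y Hy ->]; apply/imsetP; exists (x * y)%g; rewrite ?groupM //.
  by have := morphM (autm_morphism sA) Hx Hy; rewrite /= autmE => ->.
apply/subsetP => _ /imsetP[x Hx ->]; by rewrite !inE Aut_closed.
Qed.

Lemma inner_cls (s : {perm gH}) : s \in Aut H ->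
  (diagH \in [set (s h, h) | h in H] :^: setX H H)%g = innerb H s.
Proof.
move=> sA; apply/imsetP/existsP => [[[a b]]|[x /andP[Hx /forall_inP sx]]].
  rewrite inE => /andP[Ha Hb] /= E.
  exists (b * a^-1)%g; rewrite groupM ?groupV //=; apply/forall_inP => h Hh.
  have : ((s h, h) ^ (a, b))%g \in diagH by rewrite E memJ_conjg; apply/imsetP; exists h.
  case/imsetP => y _ /= [E1 E2].
  have E3 : (s h ^ a)%g = (h ^ b)%g by apply: (etrans E1); symmetry; exact: E2.
  by apply/eqP; rewrite conjgM -E3 conjgK.
exists (x^-1, 1)%g; first by rewrite !inE groupV Hx group1.
rewrite /conjugate -imset_comp; apply: eq_in_imset => h Hh /=.
rewrite (eqP (sx h Hh)).
have -> : ((h ^ x, h) ^ (x^-1, 1))%g = ((h ^ x) ^ x^-1, h ^ 1)%g by [].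
by rewrite conjgK conjg1.
Qed.

End S9.

Lemma taupi0 (k : fieldType) (k0 : [pchar k] =i pred0) (gH : finGroupType) (H : {group gH})
   (g : kB k gH gH) : taupi H g 0 -> bcls H H g (diagH H) = 0.
Proof.
case=> c [Hc hI].
have := kIA_vanish k0 hI (N := diagH H); rewrite card_diagH leqnn => /(_ isT).
rewrite bcls_add bcls_opp bcls_sum !ffunE sum_ffunE => /eqP; rewrite subr_eq0 => /eqP ->.
rewrite -[RHS]Hc big_mkcondr /=; apply: eq_bigr => s sA.
rewrite bcls_scale ffunE /Iso bcls_delta bsub_Iso // inner_cls //=.
by case: (innerb H s); [exact: mulr1 | exact: mulr0].
Qed.


Section S10.
Variables (gX gY gZ : finGroupType) (X : {group gX}) (Y : {group gY}) (Z : {group gZ}).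
Variables (L : {set gX * gY}) (M : {set gY * gZ}).

Definition phi (g : gX * (gY * gZ)) : {set gX * gY} * {set gY * gZ} :=
  (((g.1, g.2.1) : gX * gY) *: L, ((g.2.1, g.2.2) : gY * gZ) *: M)%g.

Lemma G3_group : group_set (G3 X Y Z).
Proof. exact: groupP. Qed.

Lemma fiber_card g0 : g0 \in G3 X Y Z ->
  #|[set g in G3 X Y Z | phi g == phi g0]| = #|stab3 X Y Z (phi g0).1 (phi g0).2|.
Proof.
move=> G0; rewrite -(card_rcoset _ (g0^-1)%g); apply: eq_card => h.
move: G0; rewrite mem_rcoset invgK !inE => /and3P[G1 G2 G3'] /=.
rewrite !groupMr //; congr (_ && _).
by rewrite /phi /= xpair_eqE -!lcosetM.
Qed.

Lemma phi_in g : g \in G3 X Y Z ->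
  ((phi g).1 \in lcosets L (setX X Y)) && ((phi g).2 \in lcosets M (setX Y Z)).
Proof.
rewrite !inE => /and3P[G1 G2 G3'].
by apply/andP; split; apply/lcosetsP; [exists (g.1, g.2.1) | exists (g.2.1, g.2.2)]; rewrite ?inE ?G1 ?G2 ?G3'.
Qed.

Lemma sum_stab_trans :
  (forall u v, u \in lcosets L (setX X Y) -> v \in lcosets M (setX Y Z) ->
     exists2 g, g \in G3 X Y Z & phi g = (u, v)) ->
  (\sum_(u in lcosets L (setX X Y)) \sum_(v in lcosets M (setX Y Z)) #|stab3 X Y Z u v|
     = #|G3 X Y Z|)%N.
Proof.
move=> tr.
transitivity (\sum_(u in lcosets L (setX X Y)) \sum_(v in lcosets M (setX Y Z))
                \sum_(g in G3 X Y Z) (phi g == (u, v)) : nat)%N.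
  apply: eq_bigr => u Uu; apply: eq_bigr => v Vv.
  have [g0 G0 E] := tr u v Uu Vv.
  have := fiber_card G0; rewrite E /= => <-.
  rewrite -sum1_card big_mkcond [RHS]big_mkcond /=; apply: eq_bigr => g _.
  by rewrite inE; case: (g \in _); case: (phi g == _).
under eq_bigr => u _ do rewrite exchange_big /=.
rewrite exchange_big /= -sum1_card; apply: eq_bigr => g G.
have /andP[U1 V2] := phi_in G.
rewrite (bigD1 (phi g).1) //= [X in (_ + X)%N]big1 ?addn0; last first.
  move=> u /andP[_ nu]; apply: big1 => v _.
  case: eqP => // E; have Eu : u = (phi g).1 by rewrite E.
  by move: nu; rewrite Eu /= eqxx.
rewrite (bigD1 (phi g).2) //= [X in (_ + X)%N]big1 ?addn0; first by rewrite /phi eqxx.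
move=> v /andP[_ nv].
case: eqP => // E; have Ev : v = (phi g).2 by rewrite E.
by move: nv; rewrite Ev /= eqxx.
Qed.

End S10.


Lemma p13J (gX gY gZ : finGroupType) (S : {set gX * (gY * gZ)}) (a : gX * (gY * gZ)) :
  p13 (S :^ a)%g = (p13 S :^ ((a.1, a.2.2) : gX * gZ))%g.
Proof. by rewrite /p13 /conjugate -!imset_comp; apply: eq_imset. Qed.

Lemma stab1E (T : finGroupType) (L : {set T}) x : group_set L -> ((x *: L) == L)%g = (x \in L).
Proof. by move=> gL; have := stabE 1%g x gL; rewrite lcoset1 conjg1. Qed.

Section S11.
Variables (gX gY gZ : finGroupType) (X : {group gX}) (Y : {group gY}) (Z : {group gZ}).
Variables (L : {set gX * gY}) (M : {set gY * gZ}).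
Hypotheses (gL : group_set L) (gM : group_set M).

Lemma stab3_phi g : g \in G3 X Y Z ->
  stab3 X Y Z (phi L M g).1 (phi L M g).2 = (stab3 X Y Z L M :^ g^-1)%g.
Proof.
move=> Gg; apply/setP => h.
rewrite /phi /= stab3P // !mem_conjgV [RHS]in_set !stab1E //.
by rewrite /G3 groupJr.
Qed.

End S11.

Lemma bcomp_delta (k : fieldType) (gX gY gZ : finGroupType) (X : {group gX}) (Y : {group gY}) (Z : {group gZ})
   (L : {set gX * gY}) (M : {set gY * gZ}) :
  bsub X Y L -> bsub Y Z M -> bcomp X Y Z (bdelta k L) (bdelta k M) = compL k X Y Z L M.
Proof.
move=> bL bM; rewrite /bcomp (bigD1 L) //= [X in _ + X]big1 ?addr0; last first.
  move=> L' /andP[_ nL]; apply: big1 => M' _; by rewrite ffunE (negbTE nL) mul0r scale0r.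
rewrite (bigD1 M) //= [X in _ + X]big1 ?addr0; last first.
  move=> M' /andP[_ nM]; by rewrite !ffunE (negbTE nM) mulr0 scale0r.
by rewrite !ffunE !eqxx mulr1 scale1r.
Qed.

Section S12.
Variables (gX gH : finGroupType) (X : {group gX}) (S H : {group gH}).
Hypothesis sSH : S \subset H.
Variable L : {set gX * gH}.
Hypothesis bL : bsub X S L.

Definition DS : {set gH * gH} := [set (s, s) | s in S].

Lemma gDS : group_set DS.
Proof.
apply/group_setP; split; first by apply/imsetP; exists 1%g.
move=> _ _ /imsetP[x Sx ->] /imsetP[y Sy ->]; apply/imsetP; exists (x * y)%g => //.
by rewrite groupM.
Qed.

Lemma bifree_DS : bifree S H DS.
Proof.
apply/andP; split; first (apply/andP; split; first exact: gDS).
  by apply/subsetP => _ /imsetP[x Sx ->]; rewrite !inE Sx (subsetP sSH).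
by apply/forall_inP => _ /imsetP[x Sx ->].
Qed.

Lemma p13_stab1 : p13 (stab3 X S H L DS) = L.
Proof.
have gL : group_set L by case/andP: bL.
have sL : L \subset setX X S by case/andP: bL.
apply/setP => [[x y]]; apply/imsetP/idP => [[g]|Lxy].
  rewrite -[L in stab3 _ _ _ L]lcoset1 -[DS in stab3 _ _ _ _ DS]lcoset1 stab3P ?gDS //.
  rewrite !invg1 !conjsg1 => /and3P[_ A /imsetP[s _ [E1 E2]]] [-> ->].
  by rewrite E2 -E1.
have := subsetP sL _ Lxy; rewrite !inE /= => /andP[Xx Sy].
exists (x, (y, y)) => //.
rewrite -[L in stab3 _ _ _ L]lcoset1 -[DS in stab3 _ _ _ _ DS]lcoset1 stab3P ?gDS //.
rewrite !invg1 !conjsg1 /= Lxy !inE Xx Sy (subsetP sSH) //=.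
by apply/imsetP; exists y.
Qed.

Lemma trans_S u v : u \in lcosets L (setX X S) -> v \in lcosets DS (setX S H) ->
  exists2 g, g \in G3 X S H & phi L DS g = (u, v).
Proof.
case/lcosetsP => a Ga -> /lcosetsP[b Gb ->].
move: Ga Gb; rewrite !inE => /andP[Xa Sa] /andP[Sb Hb].
exists (a.1, (a.2, b.2 * b.1^-1 * a.2))%g.
  by rewrite !inE /= Xa Sa !groupM ?groupV // (subsetP sSH).
rewrite /phi /= -surjective_pairing; congr (_, _).
apply/(@lcoset_eqP _ (Group gDS)); rewrite mem_lcoset.
apply/imsetP; exists (b.1^-1 * a.2)%g; first by rewrite groupM ?groupV.
rewrite (_ : (b^-1 * (a.2, b.2 * b.1^-1 * a.2))%g = ((b.1^-1 * a.2)%g, (b.2^-1 * (b.2 * b.1^-1 * a.2))%g)) //.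
by rewrite -!mulgA mulKg.
Qed.

Lemma bsubXH : bsub X H L.
Proof.
case/andP: bL => gL sL; rewrite /bsub gL; apply: subset_trans sL _.
by apply/subsetP => p; rewrite !inE => /andP[-> /(subsetP sSH)].
Qed.

Lemma compL_DS (k : fieldType) (k0 : [pchar k] =i pred0) :
  bequiv X H (compL k X S H L DS) (bdelta k L).
Proof.
have gL : group_set L by case/andP: bL.
apply/ffunP => N; rewrite bcls_delta /compL bcls_sum sum_ffunE.
set c : k := (_ && _)%:R.
transitivity (\sum_(u in lcosets L (setX X S)) \sum_(v in lcosets DS (setX S H))
   ((#|stab3 X S H u v|)%:R / (#|G3 X S H|)%:R) * c).
  apply: eq_bigr => u Uu; rewrite bcls_sum sum_ffunE; apply: eq_bigr => v Vv.
  rewrite bcls_scale ffunE bcls_delta; congr (_ * _).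
  have [g G E] := trans_S Uu Vv.
  have -> : p13 (stab3 X S H u v) = (L :^ ((((g^-1)%g).1, ((g^-1)%g).2.2) : gX * gH))%g.
    have [-> ->] : u = (phi L DS g).1 /\ v = (phi L DS g).2 by rewrite E.
    by rewrite stab3_phi ?gDS // p13J p13_stab1.
  have Gi : ((((g^-1)%g).1, ((g^-1)%g).2.2) : gX * gH) \in setX X H.
    by move: (groupVr G); rewrite !inE => /and3P[-> _ ->].
  rewrite /c bsubJ ?bsubXH //=.
  by rewrite conjugates_conj lcoset_id.
under eq_bigr => u _ do rewrite -mulr_suml -mulr_suml -natr_sum.
rewrite -mulr_suml -mulr_suml -natr_sum sum_stab_trans; last by move=> u v; exact: trans_S.
rewrite divff ?mul1r //; apply: (natk_neq0 k0).
by apply/card_gt0P; exists 1%g; exact: group1.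
Qed.

End S12.


Lemma inkA_delta (k : fieldType) (gX gY : finGroupType) (X : {group gX}) (Y : {group gY}) L :
  bifree X Y L -> inkA X Y (bdelta k L).
Proof.
move=> fL; exists (bdelta k L); split => // M; rewrite ffunE.
have [->|nML] := eqVneq M L; first by [].
by rewrite /= eqxx.
Qed.

Definition p2set (gX gH : finGroupType) (L : {set gX * gH}) : {set gH} := [set p.2 | p in L].

Lemma proper_kIA (k : fieldType) (k0 : [pchar k] =i pred0) (gX gH : finGroupType)
   (X : {group gX}) (H : {group gH}) (L : {set gX * gH}) :
  bifree X H L -> ~~ (H \subset p2set L) -> inkIA X H (bdelta k L).
Proof.
move=> fL nHS.
have /andP[/andP[gL sL] bf] := fL.
have gS : group_set (p2set L).
  apply/group_setP; split; first by apply/imsetP; exists 1%g; rewrite ?group1 //; exact: (@group1 _ (Group gL)).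
  move=> _ _ /imsetP[p Lp ->] /imsetP[q Lq ->]; apply/imsetP; exists (p * q)%g => //.
  exact: (@groupM _ (Group gL)).
pose S := Group gS.
have sSH : S \subset H.
  by apply/subsetP => _ /imsetP[p Lp ->]; have := subsetP sL _ Lp; rewrite inE => /andP[].
have bLS : bsub X S L.
  rewrite /bsub gL; apply/subsetP => p Lp; rewrite inE.
  have := subsetP sL _ Lp; rewrite inE => /andP[-> _] /=.
  by apply/imsetP; exists p.
apply: (@kIA_equiv _ _ _ _ _ (bcomp X S H (bdelta k L) (bdelta k (DS S)))).
  rewrite bcomp_delta //; first exact: compL_DS.
  by case/andP: (bifree_DS sSH).
apply: kIA_prod.
- by exists S; split; [rewrite properE sSH | exact: isog_refl].
- by apply: inkA_delta; rewrite /bifree bLS.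
- exact: inkA_delta (bifree_DS sSH).
Qed.


Section S13.
Variables (gX gH : finGroupType) (X : {group gX}) (H : {group gH}).

Lemma bifree_card (M : {set gX * gH}) : bifree X H M -> (#|M| <= #|H|)%N.
Proof.
move=> fM; have /andP[/andP[_ sM] _] := fM.
rewrite -(@card_in_imset _ _ (fun p : gX * gH => p.2) M); last first.
  move=> [x y] [x' y'] Mp Mq /= E; subst y'.
  by rewrite (bf_inj1 fM Mp Mq).
apply: subset_leq_card; apply/subsetP => _ /imsetP[p Mp ->].
by have := subsetP sM _ Mp; rewrite inE => /andP[].
Qed.

Lemma diag_stab_cls (L M : {set gX * gH}) u v :
  bifree X H L -> bifree X H M ->
  u \in lcosets (swapset L) (setX H X) -> v \in lcosets M (setX X H) ->
  (diagH H \in p13 (stab3 H X H u v) :^: setX H H)%g ->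
  (L \in M :^: setX X H)%g.
Proof.
move=> fL fM /lcosetsP[a Ga ->] /lcosetsP[b Gb ->] /imsetP[d Gd dE].
have gL : group_set L by case/andP: fL => /andP[].
have gM : group_set M by case/andP: fM => /andP[].
have gsL : group_set (swapset L) by rewrite group_set_swap.
pose c : gX * gH := (((a^-1)%g).2, ((a^-1)%g).1).
have Gc : c \in setX X H by move: (groupVr Ga); rewrite !inE andbC.
pose L1 := (L :^ c)%g; pose M1 := (M :^ (b^-1)%g)%g.
have fL1 : bifree X H L1 by exact: bifreeJ.
have fM1 : bifree X H M1 by apply: bifreeJ; rewrite ?groupV.
have stE g : g \in stab3 H X H (a *: swapset L)%g (b *: M)%g ->
    ((g.2.1, g.1) \in L1) && ((g.2.1, g.2.2) \in M1).
  rewrite stab3P // => /and3P[_ A B]; rewrite B andbT.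
  have E : (swapset L :^ (a^-1)%g)%g = swapset L1.
    by rewrite /L1 swapset_conj /= [in LHS](surjective_pairing a).
  by move: A; rewrite E mem_swapset.
pose e := (d.1 * (d.2)^-1)%g.
have Hd : (d.1 \in H) && (d.2 \in H) by move: Gd; rewrite !inE.
case/andP: Hd => Hd1 Hd2.
have He : e \in H by rewrite groupM ?groupV.
have inP h : h \in H -> exists2 x, (x, h) \in L1 & (x, (h ^ e)%g) \in M1.
  move=> Hh.
  have : ((h, (h ^ e)%g) : gH * gH) \in p13 (stab3 H X H (a *: swapset L)%g (b *: M)%g).
    rewrite -(conjsgK d (p13 _)) -dE mem_conjgV.
    apply/imsetP; exists (h ^ d.1)%g; first by rewrite groupJ.
    apply: (@etrans _ _ ((h ^ d.1)%g, ((h ^ e) ^ d.2)%g)); first by [].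
    by rewrite -conjgM /e mulgKV.
  case/imsetP => g /stE /andP[A B] [E1 E2].
  by exists g.2.1; [rewrite E1 | rewrite E2].
have sL1 : L1 \subset setX X H by have /andP[/andP[_ sL1] _] := fL1.
have sub : (L1 :^ ((1%g, e) : gX * gH) \subset M1)%g.
  apply/subsetP => p; rewrite mem_conjg => Lp.
  set q := (p ^ _)%g in Lp.
  have -> : p = (q ^ ((1%g, e) : gX * gH))%g by rewrite /q conjgKV.
  have Hq : q.2 \in H by have := subsetP sL1 _ Lp; rewrite inE => /andP[].
  have [x Lx Mx] := inP _ Hq.
  have xq : x = q.1 by apply: (bf_inj1 fL1 Lx); rewrite -surjective_pairing.
  have -> : (q ^ ((1%g, e) : gX * gH))%g = ((q.1 ^ 1)%g, (q.2 ^ e)%g) by [].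
  by rewrite conjg1 -xq.
have cL1 : (#|H| <= #|L1|)%N.
  apply: leq_trans (leq_imset_card (fun p : gX * gH => p.2) L1).
  apply: subset_leq_card; apply/subsetP => h Hh.
  by have [x Lx _] := inP _ Hh; apply/imsetP; exists (x, h).
have EM : (L1 :^ ((1%g, e) : gX * gH))%g = M1.
  apply/eqP; rewrite eqEcard sub cardJg /=.
  exact: leq_trans (bifree_card fM1) cL1.
have Ge : ((1%g, e) : gX * gH) \in setX X H by rewrite inE group1 He.
have m1 : (M1 \in M :^: setX X H)%g by apply: imset_f; rewrite groupV.
have m2 : (M1 \in L1 :^: setX X H)%g by rewrite -EM; apply: imset_f.
have m3 : (L1 \in L :^: setX X H)%g by apply: imset_f.
rewrite -(cls_trans m1) (cls_trans m2) (cls_trans m3); exact: cls_refl.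
Qed.

End S13.


Lemma scaleo (k : fieldType) (a b : k) : (a *: (b : k^o)) = a * b.
Proof. by []. Qed.

Section S14.
Variables (gX gH : finGroupType) (X : {group gX}) (H : {group gH}).
Variable M : {set gX * gH}.
Hypotheses (fM : bifree X H M) (full : H \subset p2set M).

Lemma p13_stab_swap : p13 (stab3 H X H (swapset M) M) = diagH H.
Proof.
have gM : group_set M by case/andP: fM => /andP[].
have gsM : group_set (swapset M) by rewrite group_set_swap.
have sM : M \subset setX X H by case/andP: fM => /andP[].
apply/setP => [[h1 h2]]; apply/imsetP/imsetP => [[g]|[h Hh [-> ->]]].
  rewrite -[swapset M]lcoset1 -[M in stab3 _ _ _ _ M]lcoset1 stab3P // !invg1 !conjsg1.
  rewrite mem_swapset => /and3P[G A B] [-> ->].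
  exists g.1; last by rewrite -(bf_inj2 fM A B).
  by move: G; rewrite !inE => /and3P[].
have /imsetP[p Mp Eh] := subsetP full _ Hh.
have := subsetP sM _ Mp; rewrite inE => /andP[Xp _].
exists (h, (p.1, h)) => //.
rewrite -[swapset M]lcoset1 -[M in stab3 _ _ _ _ M]lcoset1 stab3P // !invg1 !conjsg1.
by rewrite mem_swapset /= !inE Hh Xp /= Eh -surjective_pairing Mp.
Qed.

Lemma cMM_neq0 (k : fieldType) (k0 : [pchar k] =i pred0) :
  bcls H H (compL k H X H (swapset M) M) (diagH H) != 0.
Proof.
rewrite /compL bcls_sum sum_ffunE.
under eq_bigr => u _ do rewrite bcls_sum sum_ffunE.
under eq_bigr => u _ do under eq_bigr => v _ do
  rewrite bcls_scale ffunE bcls_delta scaleo mulrAC -natrM.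
under eq_bigr => u _ do rewrite -mulr_suml -natr_sum.
rewrite -mulr_suml -natr_sum mulf_neq0 //.
  2: by rewrite invr_eq0 (natk_neq0 k0) //; apply/card_gt0P; exists 1%g; exact: group1.
apply: (natk_neq0 k0).
have U0 : swapset M \in lcosets (swapset M) (setX H X).
  by apply/lcosetsP; exists 1%g; rewrite ?group1 ?lcoset1.
have V0 : M \in lcosets M (setX X H).
  by apply/lcosetsP; exists 1%g; rewrite ?group1 ?lcoset1.
rewrite (bigD1 _ U0) /= (bigD1 _ V0) /= -addnA addn_gt0; apply/orP; left.
rewrite p13_stab_swap muln_gt0; apply/andP; split.
  by apply/card_gt0P; exists 1%g; rewrite inE !group1 !mul1g !eqxx.
have := bsub_Iso (group1 (Aut_group H)).
rewrite (_ : [set (_ h, h) | h in H] = diagH H); last by apply: eq_imset => h; rewrite perm1.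
by move=> ->; rewrite cls_refl.
Qed.

End S14.


Lemma bopE (k : fieldType) (gX gY : finGroupType) (f : kB k gX gY) N : bop f N = f (swapset N).
Proof. by rewrite ffunE. Qed.

Lemma bcomp_deltar (k : fieldType) (gX gY gZ : finGroupType) (X : {group gX}) (Y : {group gY}) (Z : {group gZ})
   (a : kB k gX gY) (M : {set gY * gZ}) :
  bsub Y Z M -> bcomp X Y Z a (bdelta k M) = \sum_(L | bsub X Y L) a L *: compL k X Y Z L M.
Proof.
move=> bM; rewrite /bcomp; apply: eq_bigr => L _.
rewrite (bigD1 M) //= [X in _ + X]big1 ?addr0; last first.
  by move=> M' /andP[_ nM]; rewrite ffunE (negbTE nM) mulr0 scale0r.
by rewrite ffunE eqxx mulr1.
Qed.

Lemma ffun_expand (k : fieldType) (gX gY : finGroupType) (f : kB k gX gY) :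
  f = \sum_L f L *: bdelta k L.
Proof.
apply/ffunP => N; rewrite sum_ffunE (bigD1 N) //= [X in _ + X]big1 ?addr0; last first.
  by move=> L nL; rewrite !ffunE eq_sym (negbTE nL) scaleo mulr0.
by rewrite !ffunE eqxx scaleo mulr1.
Qed.

Lemma fullJ (gX gH : finGroupType) (X : {group gX}) (H : {group gH}) (L : {set gX * gH}) g :
  H \subset p2set L -> g \in setX X H -> H \subset p2set (L :^ g)%g.
Proof.
move=> full Gg; apply/subsetP => h Hh.
have Hg2 : g.2 \in H by move: Gg; rewrite inE => /andP[].
have /imsetP[p Lp Ep] := subsetP full _ (groupJ Hh (groupVr Hg2)).
apply/imsetP; exists (p ^ g)%g; first by rewrite memJ_conjg.
have -> : ((p ^ g)%g).2 = (p.2 ^ g.2)%g by [].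
by rewrite -Ep conjgKV.
Qed.

Section S15.
Variable k : fieldType.
Hypothesis k0 : [pchar k] =i pred0.
Variables (gX gH : finGroupType) (X : {group gX}) (H : {group gH}).
Variable a : kB k gX gH.
Hypothesis fa : forall L, a L != 0 -> bifree X H L.
Hypothesis hyp : forall M, bifree X H M ->
  bcls H H (bcomp H X H (bop a) (bdelta k M)) (diagH H) = 0.

Lemma claimC M : bifree X H M -> H \subset p2set M -> bcls X H a M = 0.
Proof.
move=> fM full; have bM : bsub X H M by case/andP: fM.
have := hyp fM; rewrite bcomp_deltar // bcls_sum sum_ffunE.
under eq_bigr => L _ do rewrite bcls_scale ffunE bopE scaleo.
rewrite (reindex (@swapset _ _) (onW_bij _ (Bijective (@swapsetK _ _) (@swapsetK _ _)))) /=.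
under eq_bigl => L do rewrite bsub_swap.
under eq_bigr => L _ do rewrite swapsetK.
rewrite (bigID (fun L => L \in (M :^: setX X H)%g)) /=.
rewrite [X in _ + X]big1 ?addr0; last first.
  move=> L /andP[bL nL]; have [->|/fa fL] := eqVneq (a L) 0; first by rewrite mul0r.
  rewrite /compL bcls_sum sum_ffunE big1 ?mulr0 // => u Uu.
  rewrite bcls_sum sum_ffunE big1 // => v Vv.
  rewrite bcls_scale ffunE bcls_delta.
  case: (boolP (diagH H \in _)) => [/(diag_stab_cls fL fM Uu Vv) LM|_].
    by rewrite LM in nL.
  by rewrite andbF scaleo mulr0.
rewrite (eq_bigr (fun L => a L * bcls H H (compL k H X H (swapset M) M) (diagH H))); last first.
  move=> L /andP[_ /imsetP[g Gg ->]]; rewrite swapset_conj compLJl //.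
  by move: Gg; rewrite !inE andbC.
rewrite -mulr_suml => /eqP; rewrite mulf_eq0 (negbTE (cMM_neq0 fM full k0)) orbF => /eqP <-.
rewrite bclsE; apply: eq_bigl => L; case bL: (bsub X H L) => //=.
by apply/idP/idP => /cls_sym.
Qed.

End S15.

Unset Implicit Arguments.

Theorem proposition12p1 (k : fieldType) (gX gH : finGroupType)
    (X : {group gX}) (H : {group gH}) :
  [pchar k] =i pred0 ->
  forall alpha : kB k gX gH, inkA X H alpha ->
  (forall beta : kB k gX gH, inkA X H beta ->
     taupi H (bcomp H X H (bop alpha) beta) 0) ->
  inkIA X H alpha.
Proof.
move=> k0 alpha [a [ea fa]] hyp0.
have hyp M : bifree X H M -> bcls H H (bcomp H X H (bop a) (bdelta k M)) (diagH H) = 0.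
  move=> fM; rewrite -(bcomp_equivl k0 _ _ (bop_equiv ea)).
  by apply: (taupi0 k0); apply: hyp0; exact: inkA_delta.
apply: (kIA_equiv (esym ea)).
rewrite (ffun_expand a) (bigID (fun L => H \subset p2set L)) /=.
apply: kIA_add.
  apply: (@kIA_equiv _ _ _ _ _ 0); last exact: kIA_zero.
  apply/ffunP => N; rewrite bcls0 ffunE bcls_sum sum_ffunE.
  under eq_bigr => L _ do rewrite bcls_scale ffunE bcls_delta scaleo.
  case: (boolP (bifree X H N && (H \subset p2set N))) => [/andP[fN fullN]|nN].
    symmetry; transitivity (bcls X H a N); last exact: (claimC k0 fa hyp fN fullN).
    rewrite bclsE big_mkcond [RHS]big_mkcond /=.
    apply: eq_bigr => L _; case: (boolP (bsub X H L && _)) => [/andP[bL NL]|nL].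
      have /imsetP[g Gg ->] := cls_sym NL.
      by rewrite (fullJ (X := X) fullN Gg) mulr1.
    by case: ifP => // _; exact: mulr0.
  symmetry; rewrite big1 // => L full; have [->|/fa fL] := eqVneq (a L) 0; first by rewrite mul0r.
  case: (boolP (bsub X H L && _)) => [/andP[bL /imsetP[g Gg E]]|_]; last exact: mulr0.
  by move: nN; rewrite E (bifreeJ fL Gg) (fullJ (X := X) full Gg).
apply: big_ind => //; first exact: kIA_zero.
  by move=> f g; exact: kIA_add.
move=> L nfull; have [->|/fa fL] := eqVneq (a L) 0.
  by rewrite scale0r; exact: kIA_zero.
by apply: kIA_scale; exact: proper_kIA.
Qed.
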